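(* For all integers $m,r\ge 0$ and $n\ge 1$, and all real $x\neq 0$, $$H_{m+r,n}(x)=m!\,r!\,n\,n!\sum_{k=0}^{m}\sum_{\nu=0}^{k}\sum_{j=0}^{\nu}\alpha_{j,\nu}\,\frac{\Gamma(n+k-\nu)}{(k-\nu)!\,\nu!}\,\frac{(-x)^{\nu}}{x^{n+k}}\,\frac{H_{m-k,n}(x)}{(m-k)!\,n!}\,\frac{H_{r-\nu+j,\,n-j}(x)}{(r-\nu+j)!\,(n-j)!},$$ where any term with $r-\nu+j<0$ or $n-j<0$ is interpreted as $0$.
   Context: For integers $m,n\ge 0$, the two-index Hermite polynomial is $H_{m,n}(x)=\left(-\frac{d}{dx}+2x\right)^m(x^n)$, i.e. the operator $f\mapsto -f'+2xf$ applied $m$ times to $x^n$; by convention $H_{m,n}=0$ whenever $m<0$ or $n<0$. The numbers $\alpha_{j,\nu}$ ($0\le j\le \nu$) are defined by $\alpha_{0,\nu}=2^\nu$, $\alpha_{\nu,\nu}=1$, and $\alpha_{j,\nu}=2\alpha_{j,\nu-1}+\alpha_{j-1,\nu-1}$ for $1\le j<\nu$. $\Gamma$ is the Euler Gamma function. *)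

(* Defs.v *)
From HB Require Import structures.
From mathcomp Require Import all_boot all_order all_algebra.
Set Implicit Arguments. Unset Strict Implicit. Unset Printing Implicit Defensive.
Import Order.TTheory GRing.Theory Num.Theory.
Local Open Scope ring_scope.

Definition hermOp (R : realFieldType) (p : {poly R}) : {poly R} :=
  - p^`() + ('X * p) *+ 2.

Definition H2 (R : realFieldType) (m n : nat) : {poly R} :=
  iter m (@hermOp R) 'X^n.

(* alpha_{j,nu}: alpha_{0,nu} = 2^nu, alpha_{nu,nu} = 1,
   alpha_{j,nu} = 2 alpha_{j,nu-1} + alpha_{j-1,nu-1} for 1 <= j < nu.
   (Values for j > nu are irrelevant and never used.) *)
Fixpoint alpha (j nu : nat) : nat :=
  match nu with
  | 0 => 1
  | nu'.+1 =>
      match j with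
      | 0 => 2 ^ nu
      | j'.+1 => if j == nu then 1 else 2 * alpha j nu' + alpha j' nu'
      end
  end%N.

(* Euler Gamma at positive integers: Gamma(s) = (s-1)!  (only used at s >= 1). *)
Definition GammaN (s : nat) : nat := (s.-1)`!.

(* Main.v *)
Require Import Defs.
From HB Require Import structures.
From mathcomp Require Import all_boot all_order all_algebra.
From mathcomp Require Import ring zify.
Import Order.TTheory GRing.Theory Num.Theory.
Local Open Scope ring_scope.

Local Arguments H2 : simpl never.

Lemma H2S (R : realFieldType) m n : H2 R m.+1 n = hermOp (H2 R m n).
Proof. by rewrite /H2 iterS. Qed.

Lemma hermOpD (R : realFieldType) (p q : {poly R}) :
  hermOp (p + q) = hermOp p + hermOp q.
Proof. rewrite /hermOp derivD; ring. Qed.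

Lemma hermOpMn (R : realFieldType) (p : {poly R}) k :
  hermOp (p *+ k) = hermOp p *+ k.
Proof. rewrite /hermOp derivMn; ring. Qed.

Lemma deriv_hermOp (R : realFieldType) (q : {poly R}) :
  (hermOp q)^`() = hermOp q^`() + q *+ 2.
Proof. rewrite /hermOp !derivE; ring. Qed.

Lemma derivH2 (R : realFieldType) r n :
  (H2 R r n)^`() = H2 R r.-1 n *+ (2 * r) + H2 R r n.-1 *+ n.
Proof.
elim: r => [|r IH].
  by rewrite /H2 /= derivXn muln0 mulr0n add0r.
rewrite H2S deriv_hermOp IH hermOpD !hermOpMn -H2S.
case: r IH => [|r] IH /=.
  by rewrite !mulr0n add0r mulr2n addrC.
rewrite -H2S.
ring.
Qed.

Lemma natf_neq0 (R : realFieldType) k : (0 < k)%N -> (k%:R : R) != 0.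
Proof. by move=> hk; rewrite pnatr_eq0 -lt0n. Qed.

Lemma fact_neq0 (R : realFieldType) k : ((k`!)%:R : R) != 0.
Proof. by rewrite natf_neq0 ?fact_gt0. Qed.

Definition hh (R : realFieldType) (a b : nat) : {poly R} :=
  ((a`! * b`!)%:R)^-1 *: H2 R a b.

Lemma derivhh (R : realFieldType) a b :
  (hh R a b)^`() = (if a is 0 then 0 else hh R a.-1 b) *+ 2
                   + (if b is 0 then 0 else hh R a b.-1).
Proof.
rewrite /hh derivZ derivH2 scalerDr.
have F := @fact_neq0 R.
case: a => [|a]; case: b => [|b] /=;
  rewrite ?muln0 ?mul0n ?mulr0n ?scaler0 ?add0r ?addr0 ?mul0rn //;
  rewrite -?scaler_nat ?scalerA -?scalerMnl ?add0r; try congr (_ *: _ + _ *: _); try congr (_ *: _);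
  rewrite ?factS ?natrM ?natrS; try field; rewrite ?nat1r ?F ?natf_neq0 //.
Qed.

Definition gg (R : realFieldType) (r n nu j : nat) : {poly R} :=
  if ((r + j < nu)%N || (n < j)%N) then 0 else hh R (r + j - nu) (n - j).

Lemma derivgg (R : realFieldType) r n nu j :
  (gg R r n nu j)^`() = gg R r n nu.+1 j *+ 2 + gg R r n nu.+1 j.+1.
Proof.
rewrite /gg; case: ifP => C.
  have -> : ((r + j < nu.+1)%N || (n < j)%N) = true by move: C; lia.
  have -> : ((r + j.+1 < nu.+1)%N || (n < j.+1)%N) = true by move: C; lia.
  by rewrite deriv0 mul0rn addr0.
have -> : ((r + j < nu.+1)%N || (n < j)%N) = (r + j - nu == 0)%N by move: C; lia.
have -> : ((r + j.+1 < nu.+1)%N || (n < j.+1)%N) = (n - j == 0)%N by move: C; lia.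
rewrite derivhh addnS subSS !subnS.
by case: (r + j - nu)%N => [|a]; case: (n - j)%N => [|b].
Qed.

Lemma alpha0 nu : alpha 0 nu = (2 ^ nu)%N.
Proof. by case: nu. Qed.

Lemma alphann nu : alpha nu nu = 1%N.
Proof. by case: nu => //= n; rewrite eqxx. Qed.

Lemma alphaS j nu : (j < nu)%N -> alpha j.+1 nu.+1 = (2 * alpha j.+1 nu + alpha j nu)%N.
Proof. by move=> h /=; rewrite eqSS ltn_eqF. Qed.

Local Arguments alpha : simpl never.

Lemma derivn_hh (R : realFieldType) r n nu :
  (hh R r n)^`(nu) = \sum_(j < nu.+1) gg R r n nu j *+ alpha j nu.
Proof.
elim: nu => [|nu IH].
  by rewrite derivn0 big_ord1 /gg /= addn0 !subn0 mulr1n.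
rewrite derivnS IH raddf_sum /=.
under eq_bigr => j _ do rewrite derivMn derivgg mulrnDl -mulrnA.
rewrite big_split /=.
rewrite big_ord_recl [X in _ = X]big_ord_recl [X in _ + X = _]big_ord_recr.
rewrite [X in _ = _ + X]big_ord_recr /= /bump /= !add1n.
under [X in _ = _ + (X + _)]eq_bigr => i _ do
  rewrite /= (alphaS _ _ (ltn_ord i)) mulrnDr mulrnA.
rewrite big_split /= !alpha0 !alphann expnS.
under eq_bigr do rewrite add1n.
under [X in _ = _ + (X + _ + _)]eq_bigr do rewrite add1n -mulrnA.
under [X in _ = _ + (_ + X + _)]eq_bigr do rewrite add1n.
rewrite mulr1n; ring.
Qed.

Definition theta (R : realFieldType) (c : nat) (q : {poly R}) : {poly R} :=
  - ('X * q^`()) + q *+ c.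
Arguments theta {R}.
Definition step (R : realFieldType) (c : nat) (q : {poly R}) : {poly R} :=
  theta c q + ('X^2 * q) *+ 2.
Arguments step {R}.

Lemma theta_mul (R : realFieldType) a b (f g : {poly R}) :
  theta (a + b) (f * g) = theta a f * g + f * theta b g.
Proof. rewrite /theta derivM; ring. Qed.

Lemma step_mul (R : realFieldType) a b (f g : {poly R}) :
  step (a + b) (f * g) = step a f * g + f * theta b g.
Proof. rewrite /step theta_mul; ring. Qed.

Lemma thetaD (R : realFieldType) c (f g : {poly R}) :
  theta c (f + g) = theta c f + theta c g.
Proof. rewrite /theta derivD; ring. Qed.
Lemma theta0 (R : realFieldType) c : theta c (0 : {poly R}) = 0.
Proof. rewrite /theta deriv0; ring. Qed.
Lemma thetaMn (R : realFieldType) c (f : {poly R}) k :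
  theta c (f *+ k) = theta c f *+ k.
Proof. rewrite /theta derivMn; ring. Qed.
Lemma stepD (R : realFieldType) c (f g : {poly R}) :
  step c (f + g) = step c f + step c g.
Proof. rewrite /step thetaD; ring. Qed.
Lemma step0 (R : realFieldType) c : step c (0 : {poly R}) = 0.
Proof. rewrite /step theta0; ring. Qed.
Lemma stepMn (R : realFieldType) c (f : {poly R}) k :
  step c (f *+ k) = step c f *+ k.
Proof. rewrite /step thetaMn; ring. Qed.

Lemma Xherm (R : realFieldType) c (q : {poly R}) :
  'X^(c.+1) * hermOp q = step c ('X^c * q).
Proof.
rewrite /step /theta /hermOp derivM derivXn.
case: c => [|c] /=; rewrite ?exprS ?expr0; ring.
Qed.

Definition LL (R : realFieldType) n j : {poly R} := 'X^j * H2 R j n.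

Lemma LL_S (R : realFieldType) n j : LL R n j.+1 = step j (LL R n j).
Proof. by rewrite /LL H2S Xherm. Qed.

Definition poch (n i : nat) : nat := \prod_(l < i) (n + l)%N.

Lemma pochS n i : poch n i.+1 = (poch n i * (n + i))%N.
Proof. by rewrite /poch big_ord_recr. Qed.

Lemma theta_mon (R : realFieldType) a nu (p : {poly R}) :
  theta (a + nu) ((-'X)^+nu * p^`(nu)) =
  (-'X)^+nu.+1 * p^`(nu.+1) + ((-'X)^+nu * p^`(nu)) *+ a.
Proof.
rewrite /theta derivM deriv_exp derivN derivX derivnS.
case: nu => [|nu] /=; rewrite ?exprS ?expr0; ring.
Qed.

Definition EE (R : realFieldType) n k (p : {poly R}) : {poly R} :=
  \sum_(nu < k.+1) ((-'X)^+nu * p^`(nu)) *+ ('C(k, nu) * poch n (k - nu)).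
Arguments EE {R}.

Lemma EE_S (R : realFieldType) n k (p : {poly R}) :
  EE n k.+1 p = theta (n + k) (EE n k p).
Proof.
rewrite /EE (big_morph (theta (n + k)) (thetaD R (n + k)) (theta0 R (n + k))).
set T := fun nu => (-'X)^+nu * p^`(nu).
under [RHS]eq_bigr => i _.
  rewrite thetaMn.
  have -> : (n + k = (n + (k - i)) + i)%N by move: (ltn_ord i); lia.
  rewrite theta_mon mulrnDl -[T i *+ _ *+ _]mulrnA.
  have -> : ((n + (k - i)) * ('C(k, i) * poch n (k - i)) =
            'C(k, i) * poch n (k - i).+1)%N by rewrite pochS; lia.
  have -> : (k - i).+1 = (k.+1 - i)%N by move: (ltn_ord i); lia.
  over.
rewrite /T big_split /= big_ord_recl /=.
under eq_bigr => i _ do rewrite /bump /= add1n binS mulnDl mulrnDr subSS.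
rewrite big_split /= [X in _ = _ + X]big_ord_recl /= bin0 subn0.
rewrite [X in _ + (X + _) = _]big_ord_recr /= bin_small // mul0n mulr0n addr0.
under [X in _ = _ + (_ + X)]eq_bigr => i _ do rewrite /bump /= add1n subSS.
rewrite bin0.
under [X in _ + (X + _) = _]eq_bigr => i _ do rewrite add0n.
under [X in _ + (_ + X) = _]eq_bigr => i _ do rewrite add0n.
under [X in _ = _ + (_ + X)]eq_bigr => i _ do rewrite add0n.
ring.
Qed.

Arguments LL {R}.
Definition RR (R : realFieldType) n m (p : {poly R}) : {poly R} :=
  \sum_(k < m.+1) (LL n (m - k) * EE n k p) *+ 'C(m, k).
Arguments RR {R}.

Lemma main_poly (R : realFieldType) n m (p : {poly R}) :
  'X^(n + m) * iter m (@hermOp R) p = RR n m p.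
Proof.
elim: m => [|m IH].
  rewrite /RR big_ord1 /LL /EE big_ord1 /= addn0 /H2 /=.
  by rewrite subnn expr0 mul1r /poch big_ord0 bin0 muln1 !mulr1n expr0 mul1r.
rewrite iterS addnS Xherm IH /RR.
rewrite (big_morph (step (n + m)) (stepD R (n + m)) (step0 R (n + m))).
under [LHS]eq_bigr => i _.
  rewrite stepMn.
  have -> : (n + m = (m - i) + (n + i))%N by move: (ltn_ord i); lia.
  rewrite step_mul -LL_S -EE_S mulrnDl.
  have -> : (m - i).+1 = (m.+1 - i)%N by move: (ltn_ord i); lia.
  over.
symmetry.
rewrite big_split /= big_ord_recl /=.
under eq_bigr => i _ do rewrite /bump /= add1n binS mulrnDr subSS.
rewrite big_split /= [X in _ = X + _]big_ord_recl /= bin0 subn0.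
rewrite [X in _ + (X + _) = _]big_ord_recr /= bin_small // mulr0n addr0.
under [X in _ = (_ + X) + _]eq_bigr => i _ do rewrite /bump /= add1n subSS.
by rewrite bin0 addrA.
Qed.

Lemma poch_fact n i : (0 < n)%N -> (poch n i * (n.-1)`!)%N = ((n + i).-1)`!.
Proof.
move=> hn; elim: i => [|i IH]; first by rewrite /poch big_ord0 mul1n addn0.
rewrite pochS mulnAC IH addnS /=.
case: n hn IH => [//|n] _ IH.
by rewrite addSn /= factS mulnC.
Qed.

Lemma H2_hh (R : realFieldType) r n : H2 R r n = ((r`! * n`!)%:R) *: hh R r n.
Proof.
rewrite /hh scalerA mulfV ?scale1r // natrM mulf_neq0 //; exact: fact_neq0.
Qed.

Lemma derivn_H2_eval (R : realFieldType) r n nu (x : R) :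
  ((H2 R r n)^`(nu)).[x] =
  (r`! * n`!)%:R * \sum_(j < nu.+1) (gg R r n nu j).[x] * (alpha j nu)%:R.
Proof.
rewrite H2_hh linearZ /= derivn_hh hornerZ horner_sum; congr (_ * _).
by apply: eq_bigr => j _; rewrite hornerMn mulr_natr.
Qed.

Lemma scal (R : realFieldType) (xnm a b y hk hj fr fn fn1 nn fnu fkn fmk fa fb cm ck P al fm fk G : R) :
 a != 0 -> b != 0 -> fn1 != 0 -> nn != 0 -> fnu != 0 -> fkn != 0 -> fmk != 0 ->
 fa != 0 -> fb != 0 ->
 xnm = a * b -> fm = cm * fk * fmk -> fk = ck * fnu * fkn -> G = P * fn1 -> fn = nn * fn1 ->
 xnm^-1 * (b * hk * (y * (fr * fn * ((fa * fb)^-1 * hj * al)) * (ck * P)) * cm)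
 = fm * fr * nn * fn * (al * (G / (fkn * fnu)) * (y / a) * (hk / (fmk * fn)) * (hj / (fa * fb))).
Proof. move=> h1 h2 h3 h4 h5 h6 h7 h8 h9 -> -> -> -> ->; field.
by rewrite h1 h2 h3 h4 h5 h6 h7 h8 h9.
Qed.

Theorem mainTheorem17 (R : realFieldType) (m r n : nat) (x : R) :
  (1 <= n)%N -> x != 0 ->
  (H2 R (m + r) n).[x] =
  (m`!)%:R * (r`!)%:R * n%:R * (n`!)%:R *
  \sum_(k < m.+1) \sum_(nu < k.+1) \sum_(j < nu.+1)
     (if ((r + j < nu)%N || (n < j)%N) then 0 else
      (alpha j nu)%:R
      * ((GammaN (n + k - nu))%:R / ((k - nu)`! * nu`!)%:R)
      * ((- x) ^+ nu / x ^+ (n + k))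
      * ((H2 R (m - k) n).[x] / ((m - k)`! * n`!)%:R)
      * ((H2 R (r + j - nu) (n - j)).[x] / ((r + j - nu)`! * (n - j)`!)%:R)).
Proof.
move=> hn hx.
have HmR : H2 R (m + r) n = iter m (@hermOp R) (H2 R r n) by rewrite /H2 iterD.
have E1 : x ^+ (n + m) * (H2 R (m + r) n).[x] = (RR n m (H2 R r n)).[x].
  by rewrite HmR -main_poly hornerM hornerXn.
have -> : (H2 R (m + r) n).[x] = (x ^+ (n + m))^-1 * (RR n m (H2 R r n)).[x].
  by rewrite -E1 mulKf // expf_neq0.
rewrite /RR horner_sum !mulr_sumr; apply: eq_bigr => -[k hk] _ /=.
rewrite hornerMn hornerM /LL hornerM hornerXn /EE horner_sum -mulr_natr.
rewrite !(mulr_sumr, mulr_suml); apply: eq_bigr => -[nu hnu] _ /=.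
rewrite hornerMn hornerM horner_exp hornerN hornerX derivn_H2_eval -mulr_natr.
rewrite !(mulr_sumr, mulr_suml); apply: eq_bigr => -[j hj] _ /=.
rewrite /gg; case: ifP => c.
  by rewrite horner0 !(mul0r, mulr0).
rewrite /hh hornerZ.
rewrite ltnS in hk; rewrite ltnS in hnu.
have hm : ((m`!)%:R : R) = 'C(m, k)%:R * (k`!)%:R * (((m - k)%N)`!)%:R.
  by rewrite -(bin_fact hk) !natrM mulrA.
have hkf : ((k`!)%:R : R) = 'C(k, nu)%:R * (nu`!)%:R * (((k - nu)%N)`!)%:R.
  by rewrite -(bin_fact hnu) !natrM mulrA.
have hG : ((GammaN (n + k - nu)%N)%:R : R) = (poch n (k - nu)%N)%:R * ((n.-1)`!)%:R.
  by rewrite -natrM poch_fact // /GammaN addnBA.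
have hnf : ((n`!)%:R : R) = n%:R * ((n.-1)`!)%:R.
  by rewrite -[in LHS](prednK hn) factS natrM prednK.
have hxe : x ^+ (n + m)%N = x ^+ (n + k)%N * x ^+ (m - k)%N.
  by rewrite -exprD; congr (_ ^+ _); lia.
rewrite !natrM.
have F := @fact_neq0 R.
have Fn : (n%:R : R) != 0 by rewrite natf_neq0.
have X1 : x ^+ (n + k)%N != 0 by rewrite expf_neq0.
have X2 : x ^+ (m - k)%N != 0 by rewrite expf_neq0.
eapply scal; [exact: X1 | exact: X2 | exact: (F n.-1) | exact: Fn | exact: F | exact: F
  | exact: F | exact: F | exact: F | exact: hxe | exact: hm | exact: hkf | exact: hG | exact: hnf].
Qed.
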